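(* Let $X$ be a finite set with $n$ elements, let $k\ge1$, and let $R$ be a $k$-Carthaginian rectangle on the symbol set $X$. Then $R$ arises from a sharply $k$-transitive group action if and only if $R$ satisfies the $k$-rectangle condition.
   Context: $X^{(k)}$ denotes the set of ordered $k$-tuples of distinct elements of $X$, and $n^{\underline{k}}=n(n-1)\cdots(n-k+1)$. A $k$-Carthaginian rectangle on $X$ is an $n^{\underline{k}}\times n$ matrix whose rows are permutations of $X$ (each row lists every element of $X$ exactly once) such that for every choice of $k$ distinct columns, the $k$-tuples read off from those columns in the rows range over each of the $n^{\underline{k}}$ elements of $X^{(k)}$ exactly once. A $2\times(k+1)$ submatrix of $R$ is the array obtained by choosing two distinct rows of $R$ and $k+1$ distinct columns of $R$ (listed in some order). $R$ satisfies the $k$-rectangle condition if whenever two $2\times(k+1)$ submatrices $A$ and $B$ of $R$ agree in $2k+1$ of their $2(k+1)$ corresponding positions, they also agree in the remaining position. $R$ arises from a sharply $k$-transitive group action if there is a group $G$ acting sharply $k$-transitively on $X$ (i.e. for any two elements of $X^{(k)}$ exactly one $g\in G$ maps the first to the second coordinatewise) and an enumeration $(y_1,\ldots,y_n)$ of $X$ such that the rows of $R$ are exactly the sequences $(gy_1,\ldots,gy_n)$, $g\in G$, each occurring once (the order of the rows being irrelevant). *)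

(* Defs.v *)
From mathcomp Require Import all_boot all_fingroup.
Set Implicit Arguments. Unset Strict Implicit. Unset Printing Implicit Defensive.

Definition rect (X : finType) (k : nat) := 'I_(#|X| ^_ k) -> 'I_#|X| -> X.

Definition carthaginian (X : finType) (k : nat) (R : rect X k) : Prop :=
  (forall i, bijective (R i)) /\
  (forall c : 'I_k -> 'I_#|X|, injective c ->
     forall t : 'I_k -> X, injective t ->
       exists! i, forall j, R i (c j) = t j).

Definition submx2 (X : finType) (k : nat) (R : rect X k)
    (r1 r2 : 'I_(#|X| ^_ k)) (d : 'I_k.+1 -> 'I_#|X|) : 'I_2 -> 'I_k.+1 -> X :=
  fun p q => R (if p == ord0 then r1 else r2) (d q).

Definition rectangle_condition (X : finType) (k : nat) (R : rect X k) : Prop :=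
  forall (r1 r2 s1 s2 : 'I_(#|X| ^_ k)) (d e : 'I_k.+1 -> 'I_#|X|),
    r1 != r2 -> s1 != s2 -> injective d -> injective e ->
    forall (p : 'I_2) (q : 'I_k.+1),
      (forall (p' : 'I_2) (q' : 'I_k.+1), (p', q') != (p, q) ->
          submx2 R r1 r2 d p' q' = submx2 R s1 s2 e p' q') ->
      submx2 R r1 r2 d p q = submx2 R s1 s2 e p q.

Definition sharply_k_transitive (gT : finGroupType) (X : finType)
    (to : {action gT &-> X}) (k : nat) : Prop :=
  forall u v : 'I_k -> X, injective u -> injective v ->
    exists! g : gT, forall j, to (u j) g = v j.

(* R arises from a sharply k-transitive group action: there is a group acting
   sharply k-transitively on X and an enumeration y of X such that the rows of
   R are exactly the sequences (g y_1, ..., g y_n), each occurring once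
   (f is the bijection rows -> group elements). *)
Definition arises_from_sharply_k_transitive (X : finType) (k : nat) (R : rect X k)
    : Prop :=
  exists (gT : finGroupType) (to : {action gT &-> X}) (y : 'I_#|X| -> X),
    [/\ bijective y, sharply_k_transitive to k &
        exists f : 'I_(#|X| ^_ k) -> gT,
          bijective f /\ forall i j, R i j = to (y j) (f i)].

(* Main.v *)
Require Import Defs.
From mathcomp Require Import all_boot all_fingroup.

Set Implicit Arguments. Unset Strict Implicit. Unset Printing Implicit Defensive.

Lemma fwd_core (gT : finGroupType) (X : finType) (to : {action gT &-> X}) k
  (g1 g2 h1 h2 : gT) (a b : 'I_k.+1 -> X) (q : 'I_k.+1) :
  injective a -> sharply_k_transitive to k ->
  (forall q', to (a q') g2 = to (b q') h2) ->
  (forall q', q' != q -> to (a q') g1 = to (b q') h1) ->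
  to (a q) g1 = to (b q) h1.
Proof.
move=> ia sh H2 H1.
have e : g1 = (g2 * h2^-1 * h1)%g.
  pose u := fun j => a (lift q j).
  have iu : injective u by move=> j1 j2 /ia /lift_inj.
  have iv : injective (fun j => to (u j) g1) by move=> j1 j2 /act_inj /iu.
  have [g [_ Hg]] := sh u _ iu iv.
  rewrite -(Hg g1) //; apply: Hg => j.
  by rewrite !actM H2 actK /u -H1 // eq_sym neq_lift.
by rewrite e !actM H2 actK.
Qed.

Lemma fwd (X : finType) (k : nat) (R : rect X k) :
  arises_from_sharply_k_transitive R -> rectangle_condition R.
Proof.
move=> [gT [to [y [[yi yK yiK] sh [f [_ Hf]]]]]] r1 r2 s1 s2 d e _ _ id ie p q H.
have ia : injective (fun q => y (d q)) by move=> q1 q2 /(can_inj yK) /id.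
case: p H => [[|[|pp]] Hp] //= H; rewrite /submx2 /= !Hf.
- apply: (@fwd_core _ _ to k _ (f r2) _ (f s2) _ (fun q => y (e q)) _ ia sh) => q'.
    have := H (Ordinal (isT : 1 < 2)) q' isT; by rewrite /submx2 /= !Hf.
  move=> qne; have := H ord0 q'.
  rewrite /submx2 /= !Hf; apply.
  by rewrite xpair_eqE negb_and qne orbT.
- apply: (@fwd_core _ _ to k _ (f r1) _ (f s1) _ (fun q => y (e q)) _ ia sh) => q'.
    have := H ord0 q' isT; by rewrite /submx2 /= !Hf.
  move=> qne; have := H (Ordinal Hp) q'.
  rewrite /submx2 /= !Hf; apply.
  by rewrite xpair_eqE negb_and qne orbT.
Qed.
Lemma bwd (X : finType) (k : nat) (R : rect X k) :
  1 <= k -> k <= #|X| -> carthaginian R ->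
  rectangle_condition R -> arises_from_sharply_k_transitive R.
Proof.
move=> k1 kn [Rb Rc] Hrect.
have N0 : 0 < #|X| ^_ k by rewrite ffact_gt0.
pose i0 : 'I_(#|X| ^_ k) := Ordinal N0.
pose y := R i0.
have [yi yK yiK] := Rb i0.
pose sig i x := R i (yi x).
have sinj i : injective (sig i).
  by move=> x1 x2 /(bij_inj (Rb i)) /(can_inj yiK).
pose sp i : {perm X} := perm (sinj i).
have spE i x : sp i x = R i (yi x) by rewrite permE.
have sig0 x : sig i0 x = x by apply: yiK.
have uniqS (u v : 'I_k -> X) : injective u -> injective v ->
    exists! i, forall j, sig i (u j) = v j.
  move=> iu iv; apply: Rc => // j1 j2 /(can_inj yiK) /iu //.
pose u0 := fun j : 'I_k => y (widen_ord kn j).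
have iu0 : injective u0.
  move=> j1 j2 /(can_inj yK) E; apply: val_inj; exact: (congr1 val E).
have clos a b : exists c, sp c = (sp a * sp b)%g.
  case: (eqVneq b i0) => [-> | bne].
    exists a; apply/permP => x; rewrite permM !spE; exact: (esym (sig0 _)).
  pose w := fun j => sig b (sig a (u0 j)).
  have iw : injective w by move=> j1 j2 /sinj /sinj /iu0.
  have [c [Hc Hcu]] := uniqS u0 w iu0 iw.
  exists c; apply/permP => x; rewrite permM !spE.
  case: (boolP (x \in codom u0)) => [/codomP [j ->] | xn]; first by apply: Hc.
  have ca : c != a.
    apply/eqP => eca; move/eqP: bne; apply.
    have iu1 : injective (fun j => sig a (u0 j)) by move=> j1 j2 /sinj /iu0.
    have [i [_ Hi]] := uniqS _ _ iu1 iu1.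
    rewrite -(Hi b) ?(Hi i0) // => j.
    by rewrite -[sig b _]/(w j) -Hc eca.
  pose pt := fun q : 'I_k.+1 => if unlift ord_max q is Some j then u0 j else x.
  have ipt : injective pt.
    move=> q1 q2; rewrite /pt.
    case: unliftP => [j1 ->|->]; case: unliftP => [j2 ->|->] //.
    - by move/iu0 ->.
    - by move=> E; move: xn; rewrite -E codom_f.
    - by move=> E; move: xn; rewrite E codom_f.
  pose d := fun q => yi (pt q).
  pose e := fun q => yi (sig a (pt q)).
  have id : injective d by move=> q1 q2 /(can_inj yiK) /ipt.
  have ie : injective e by move=> q1 q2 /(can_inj yiK) /sinj /ipt.
  have := Hrect c a b i0 d e ca bne id ie ord0 ord_max.
  rewrite /submx2 /= /d /e /pt unlift_none; apply.
  case=> [[|[|pp]] Hp] //= q' hne.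
  - have qne : q' != ord_max.
      by apply: contraNneq hne => ->; rewrite xpair_eqE eqxx andbT; apply/eqP/val_inj.
    case: unliftP qne => [j ->|->]; last by rewrite eqxx.
    by move=> _; apply: Hc.
pose G : {set {perm X}} := [set sp i | i in [set: 'I_(#|X| ^_ k)]].
have spG i : sp i \in G by apply: imset_f.
have gG : group_set G.
  apply/group_setP; split.
    have -> : (1%g : {perm X}) = sp i0.
      by apply/permP => x; rewrite perm1 spE; exact: (esym (sig0 x)).
    exact: spG.
  move=> _ _ /imsetP[a _ ->] /imsetP[b _ ->].
  by have [c <-] := clos a b.
pose GG := Group gG.
pose to := fun (x : X) (g : subg_of GG) => sgval g x.
have to1 : to^~ 1%g =1 id by move=> x; rewrite /to /= perm1.
have toM : forall x, act_morph to x.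
  by move=> x g h; rewrite /to sgvalM ?inE // permM.
exists (subg_of GG), (TotalAction to1 toM), y.
have toE x g : TotalAction to1 toM x g = sgval g x by [].
have f_spec : forall i, sgval (subg GG (sp i)) = sp i by move=> i; rewrite subgK.
have inG (g : subg_of GG) : exists i, sgval g = sp i.
  by have /imsetP[i _ ->] := subgP g; exists i.
split; first exact: Rb i0.
- move=> u v iu iv.
  have [i [Hi Hiu]] := uniqS u v iu iv.
  exists (subg GG (sp i)); split.
    by move=> j; rewrite toE f_spec spE; apply: Hi.
  move=> g' Hg'; have [i' E] := inG g'.
  rewrite -(sgvalK g') E; congr (subg GG (sp _)); apply: Hiu => j.
  by rewrite -(Hg' j) toE E spE.
pose f := fun i => subg GG (sp i).
have finj : injective f.
  move=> i j /(congr1 sgval); rewrite !f_spec => E.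
  have iv : injective (fun l => sig i (u0 l)) by move=> l1 l2 /sinj /iu0.
  have [l [_ Hl]] := uniqS u0 _ iu0 iv.
  rewrite -(Hl i) // (Hl j) // => m.
  have := congr1 (fun s : {perm X} => s (u0 m)) E; rewrite /= !spE => H; exact: (esym H).
exists f; split; last by move=> i j; rewrite toE f_spec spE yK.
exists (fun g => odflt i0 [pick i | f i == g]).
  move=> i; case: pickP => [i' /eqP /finj //|/(_ i)]; by rewrite eqxx.
move=> g; case: pickP => [i' /eqP //|H0].
have [i E] := inG g; have := H0 i.
by rewrite /f -E sgvalK eqxx.
Qed.

Theorem theorem3p3 (X : finType) (k : nat) (R : rect X k) :
  1 <= k -> k <= #|X| -> carthaginian R ->
  (arises_from_sharply_k_transitive R <-> rectangle_condition R).
Proof.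
move=> k1 kn HR; split; first exact: fwd.
exact: bwd.
Qed.
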